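(* Let $\mu$ be a probability measure on a measurable space $(E,\mathcal F)$ and let $(\mathcal E,\mathcal D(\mathcal E))$ be a non-conservative irreducible symmetric Dirichlet form on $L^2(\mu)$. Then there is $C>0$ such that $$\mu(f^2)\le C\,\mathcal E(f,f),\qquad f\in\mathcal D(\mathcal E),$$ if and only if there are $C_1,C_2>0$ such that $$\mu(f^2)\le C_1\,\mathcal E(f,f)+C_2\,\mu(|f|)^2,\qquad f\in\mathcal D(\mathcal E).$$
   Context: Non-conservative means either $1\notin\mathcal D(\mathcal E)$, or $1\in\mathcal D(\mathcal E)$ but $\mathcal E(1,1)>0$. In this setting, irreducible means that $f\in\mathcal D(\mathcal E)$ with $\mathcal E(f,f)=0$ implies $f=0$. *)

(* Defs.v *)
From HB Require Import structures.
From mathcomp Require Import all_boot all_order all_algebra.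
From mathcomp Require Import all_classical all_reals all_analysis.
Set Implicit Arguments. Unset Strict Implicit. Unset Printing Implicit Defensive.
Import Order.TTheory GRing.Theory Num.Theory.
Import numFieldNormedType.Exports.
Local Open Scope classical_set_scope.
Local Open Scope ring_scope.

Definition L2fun (d : measure_display) (E : measurableType d) (R : realType)
  (mu : {measure set E -> \bar R}) (f : E -> R) : Prop :=
  measurable_fun setT f /\ mu.-integrable setT (fun x => ((f x) ^+ 2)%:E).

Definition muR (d : measure_display) (E : measurableType d) (R : realType)
  (mu : {measure set E -> \bar R}) (f : E -> R) : R :=
  Rintegral mu setT f.

Definition ae_eq_fun (d : measure_display) (E : measurableType d) (R : realType)
  (mu : {measure set E -> \bar R}) (f g : E -> R) : Prop :=
  {ae mu, forall x, f x = g x}.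

Definition E1norm2 (d : measure_display) (E : measurableType d) (R : realType)
  (mu : {measure set E -> \bar R}) (Ef : (E -> R) -> (E -> R) -> R) (h : E -> R) : R :=
  Ef h h + muR mu (fun x => (h x) ^+ 2).

(* A symmetric Dirichlet form (Ef, D) on L^2(mu): elements of L^2 are represented by
   functions; the domain D and the form are required to be compatible with a.e.
   equality, so that they are well defined on L^2 classes. *)
Record symmetric_Dirichlet_form (d : measure_display) (E : measurableType d)
  (R : realType) (mu : {measure set E -> \bar R})
  (D : set (E -> R)) (Ef : (E -> R) -> (E -> R) -> R) : Prop := {
  dform_L2 : forall f, D f -> L2fun mu f;
  dform_ae_dom : forall f g, D f -> L2fun mu g -> ae_eq_fun mu f g -> D g;
  dform_ae_form : forall f f' g g', D f -> D g -> ae_eq_fun mu f f' ->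
      ae_eq_fun mu g g' -> Ef f g = Ef f' g';
  dform_dom0 : D (fun _ => 0);
  dform_domD : forall f g, D f -> D g -> D (fun x => f x + g x);
  dform_domZ : forall (a : R) f, D f -> D (fun x => a * f x);
  dform_dense : forall f, L2fun mu f -> forall eps : R, 0 < eps ->
      exists g, D g /\ muR mu (fun x => (f x - g x) ^+ 2) < eps;
  dform_sym : forall f g, D f -> D g -> Ef f g = Ef g f;
  dform_lin : forall (a : R) f g h, D f -> D g -> D h ->
      Ef (fun x => a * f x + g x) h = a * Ef f h + Ef g h;
  dform_nonneg : forall f, D f -> 0 <= Ef f f;
  dform_closed : forall u : nat -> E -> R, (forall n, D (u n)) ->
      (forall eps : R, 0 < eps -> exists N : nat, forall m n : nat,
          (N <= m)%N -> (N <= n)%N ->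
          E1norm2 mu Ef (fun x => u n x - u m x) < eps) ->
      exists f, D f /\
        E1norm2 mu Ef (fun x => u n x - f x) @[n --> \oo] --> (0 : R);
  dform_markov : forall f, D f ->
      D (fun x => Num.min (Num.max (f x) 0) 1) /\
      Ef (fun x => Num.min (Num.max (f x) 0) 1)
         (fun x => Num.min (Num.max (f x) 0) 1) <= Ef f f
}.

Definition non_conservative (d : measure_display) (E : measurableType d)
  (R : realType) (D : set (E -> R)) (Ef : (E -> R) -> (E -> R) -> R) : Prop :=
  ~ D (fun _ => 1) \/ (D (fun _ => 1) /\ 0 < Ef (fun _ => 1) (fun _ => 1)).

Definition dform_irreducible (d : measure_display) (E : measurableType d)
  (R : realType) (mu : {measure set E -> \bar R})
  (D : set (E -> R)) (Ef : (E -> R) -> (E -> R) -> R) : Prop :=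
  forall f, D f -> Ef f f = 0 -> ae_eq_fun mu f (fun _ => 0).

(* Main.v *)
Require Import Defs.
From HB Require Import structures.
From mathcomp Require Import all_boot all_order all_algebra.
From mathcomp Require Import all_classical all_reals all_analysis.
From mathcomp Require Import ring lra measurable_realfun.
Import Order.TTheory GRing.Theory Num.Theory.
Import numFieldNormedType.Exports.
Local Open Scope classical_set_scope.
Local Open Scope ring_scope.

Section S.
Context (d : measure_display) (E : measurableType d) (R : realType)
  (mu : probability E R) (D : set (E -> R)) (Ef : (E -> R) -> (E -> R) -> R).
Hypothesis HD : symmetric_Dirichlet_form mu D Ef.

Lemma mu1 : mu setT = 1%E.
Proof. exact: probability_setT. Qed.

Lemma mfD {f} : D f -> measurable_fun setT f.
Proof. by move=> /(dform_L2 HD) []. Qed.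

Lemma int2 {f} : D f -> mu.-integrable setT (EFin \o (fun x => f x ^+ 2)).
Proof. by move=> /(dform_L2 HD) []. Qed.

Lemma intcst k : mu.-integrable setT (EFin \o (fun _ : E => k)).
Proof. exact: finite_measure_integrable_cst. Qed.

Lemma intD {f} : D f -> mu.-integrable setT (EFin \o f).
Proof.
move=> Df.
have h : mu.-integrable setT (EFin \o (fun x => 1 + f x ^+ 2)).
  apply: (eq_integrable measurableT _ _ _ (integrableD measurableT (intcst 1) (int2 Df))).
  by move=> x _; rewrite /= EFinD.
apply: (le_integrable _ _ _ h) => //.
  by apply/measurable_EFinP; exact: mfD.
move=> x _ /=; rewrite lee_fin.
rewrite [X in _ <= X]ger0_norm ?addr_ge0 ?sqr_ge0//.
have e : f x ^+ 2 = `|f x| ^+ 2 by rewrite real_normK ?num_real.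
rewrite e; have := sqr_ge0 (`|f x| - 1); nra.
Qed.

Lemma intM {f g} : D f -> D g -> mu.-integrable setT (EFin \o (fun x => f x * g x)).
Proof.
move=> Df Dg.
have h : mu.-integrable setT (EFin \o (fun x => f x ^+ 2 + g x ^+ 2)).
  apply: (eq_integrable measurableT _ _ _ (integrableD measurableT (int2 Df) (int2 Dg))).
  by move=> x _; rewrite /= EFinD.
apply: (le_integrable _ _ _ h) => //.
  by apply/measurable_EFinP; apply: measurable_funM; exact: mfD.
move=> x _ /=; rewrite lee_fin [`|_ + _|]ger0_norm ?addr_ge0 ?sqr_ge0//.
have e1 : f x ^+ 2 = `|f x| ^+ 2 by rewrite real_normK ?num_real.
have e2 : g x ^+ 2 = `|g x| ^+ 2 by rewrite real_normK ?num_real.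
rewrite normrM e1 e2.
have := sqr_ge0 (`|f x| - `|g x|); nra.
Qed.


Definition intg (u : E -> R) := mu.-integrable setT (EFin \o u).

Lemma intRD u v : intg u -> intg v -> intg (fun x => u x + v x).
Proof.
move=> iu iv; apply: (eq_integrable measurableT _ _ _ (integrableD measurableT iu iv)).
by move=> x _; rewrite /= EFinD.
Qed.

Lemma intRZ (a : R) u : intg u -> intg (fun x => a * u x).
Proof.
move=> iu; apply: (eq_integrable measurableT _ _ _ (integrableZl measurableT a iu)).
by move=> x _; rewrite /= EFinM.
Qed.

Lemma muRD u v : intg u -> intg v -> muR mu (fun x => u x + v x) = muR mu u + muR mu v.
Proof. by move=> iu iv; rewrite /muR RintegralD. Qed.

Lemma muRZ (a : R) u : intg u -> muR mu (fun x => a * u x) = a * muR mu u.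
Proof. by move=> iu; rewrite /muR RintegralZl. Qed.

Lemma muR_cst (k : R) : muR mu (fun _ => k) = k.
Proof. rewrite /muR Rintegral_cst//. have h : fine (mu setT) = 1 by exact: (congr1 fine (probability_setT mu)). by rewrite h mulr1. Qed.

Lemma muR_le u v : intg u -> intg v -> (forall x, u x <= v x) -> muR mu u <= muR mu v.
Proof. by move=> iu iv uv; rewrite /muR le_Rintegral. Qed.

Lemma muR_ge0 u : (forall x, 0 <= u x) -> 0 <= muR mu u.
Proof. by move=> u0; rewrite /muR Rintegral_ge0. Qed.

Lemma muR_ext u v : (forall x, u x = v x) -> muR mu u = muR mu v.
Proof. by move=> uv; rewrite /muR (@eq_Rintegral _ _ _ _ _ v) // => x _. Qed.

Definition comb (a : R) f (b : R) g := fun x : E => a * f x + b * g x.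

Lemma Dcomb a f b g : D f -> D g -> D (comb a f b g).
Proof. by move=> Df Dg; apply: (dform_domD HD); apply: (dform_domZ HD). Qed.

Lemma Ef0 h : D h -> Ef (fun _ => 0) h = 0.
Proof.
move=> Dh; have := dform_lin HD 1 (dform_dom0 HD) (dform_dom0 HD) Dh.
have -> : (fun x : E => 1 * (fun _ : E => 0 : R) x + (fun _ => 0) x) = (fun _ => 0).
  by apply/funext => x; rewrite mulr0 addr0.
rewrite mul1r => H; lra.
Qed.

Lemma EfZ a f h : D f -> D h -> Ef (fun x => a * f x) h = a * Ef f h.
Proof.
move=> Df Dh; have := dform_lin HD a Df (dform_dom0 HD) Dh.
have -> : (fun x : E => a * f x + (fun _ => 0 : R) x) = (fun x => a * f x).
  by apply/funext => x; rewrite addr0.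
by rewrite Ef0 // addr0.
Qed.

Lemma Efcomb a f b g h : D f -> D g -> D h ->
  Ef (comb a f b g) h = a * Ef f h + b * Ef g h.
Proof.
move=> Df Dg Dh; rewrite /comb.
have := dform_lin HD a Df (dform_domZ HD b Dg) Dh.
by rewrite EfZ.
Qed.

Lemma Efcomb2 a f b g : D f -> D g ->
  Ef (comb a f b g) (comb a f b g) =
  a ^+ 2 * Ef f f + 2 * a * b * Ef f g + b ^+ 2 * Ef g g.
Proof.
move=> Df Dg; have Dc := Dcomb a f b g Df Dg.
rewrite Efcomb // (dform_sym HD Df Dc) (dform_sym HD Dg Dc) !Efcomb //.
rewrite (dform_sym HD Dg Df); ring.
Qed.

Lemma Ecomb_ge0 a f b g : D f -> D g ->
  0 <= a ^+ 2 * Ef f f + 2 * a * b * Ef f g + b ^+ 2 * Ef g g.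
Proof. by move=> Df Dg; rewrite -Efcomb2 //; apply: (dform_nonneg HD); apply: Dcomb. Qed.

Lemma muRcomb a f b g : D f -> D g ->
  muR mu (comb a f b g) = a * muR mu f + b * muR mu g.
Proof.
move=> Df Dg; rewrite /comb muRD ?muRZ //; try apply: intRZ; exact: intD.
Qed.

Lemma muRcomb2 a f b g : D f -> D g ->
  muR mu (fun x => comb a f b g x ^+ 2) =
  a ^+ 2 * muR mu (fun x => f x ^+ 2) + 2 * a * b * muR mu (fun x => f x * g x)
  + b ^+ 2 * muR mu (fun x => g x ^+ 2).
Proof.
move=> Df Dg.
have i1 : intg (fun x => f x ^+ 2) := int2 Df.
have i2 : intg (fun x => g x ^+ 2) := int2 Dg.
have i3 : intg (fun x => f x * g x) := intM Df Dg.
rewrite (@muR_ext _ (fun x => (a ^+ 2 * f x ^+ 2 + 2 * a * b * (f x * g x))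
   + b ^+ 2 * g x ^+ 2)); last by move=> x; rewrite /comb; ring.
rewrite muRD; last 2 first.
- by apply: intRD; apply: intRZ.
- exact: intRZ.
by rewrite muRD ?muRZ //; apply: intRZ.
Qed.


Lemma arch (e : R) : 0 < e -> exists k : nat, (k.+1%:R)^-1 < e.
Proof.
move=> e0; have e0' : 0 <= e^-1 by rewrite invr_ge0 ltW.
have h := archi_boundP e0'.
exists (Num.Def.archi_bound e^-1).
set n := Num.Def.archi_bound e^-1 in h *.
have hn : (n%:R : R) < n.+1%:R by rewrite ltr_nat.
have ei : e * e^-1 = 1 by rewrite mulfV // gt_eqF.
rewrite -[X in X < _]div1r ltr_pdivrMr ?ltr0Sn//.
have : 0 < e * (n.+1%:R - e^-1) by rewrite mulr_gt0 // subr_gt0 (lt_trans h).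
nra.
Qed.

Lemma jensen u : D u -> muR mu u ^+ 2 <= muR mu (fun x => u x ^+ 2).
Proof.
move=> Du; set m := muR mu u.
have h0 : 0 <= muR mu (fun x => (u x - m) ^+ 2) by apply: muR_ge0 => x; exact: sqr_ge0.
rewrite (@muR_ext _ (fun x => (u x ^+ 2 + (-2 * m) * u x) + m ^+ 2)) in h0;
  last by move=> x; ring.
rewrite muRD in h0; last 2 first.
- by apply: intRD; [exact: int2 | apply: intRZ; exact: intD].
- exact: intcst.
rewrite muRD in h0; last 2 first.
- exact: int2.
- by apply: intRZ; exact: intD.
rewrite muRZ ?muR_cst in h0; last exact: intD.
rewrite -/m in h0; nra.
Qed.

Lemma muR_ae0 p : D p -> ae_eq_fun mu p (fun _ => 0) -> muR mu p = 0.
Proof.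
move=> Dp hp; rewrite /muR /Rintegral.
rewrite (@ae_eq_integral _ _ _ mu setT (EFin \o (fun _ => 0)) (EFin \o p)) //.
- by rewrite /= integral0.
- by apply/measurable_EFinP; exact: mfD.
- by apply/measurable_EFinP; exact: measurable_cst.
- by apply: filterS hp => x px _; rewrite /= px.
Qed.


Definition Nn h := Ef h h + muR mu (fun x => h x ^+ 2).
Definition Sk (k : nat) h := [/\ D h, muR mu h = 1 & Ef h h <= (k.+1%:R)^-1].

Lemma Sk_mono {k l h} : (k <= l)%N -> Sk l h -> Sk k h.
Proof.
move=> kl [Dh mh eh]; split => //; apply: (le_trans eh).
by rewrite lef_pV2 ?posrE ?ltr0Sn // ler_nat.
Qed.

Lemma Nn_ge0 h : D h -> 0 <= Nn h.
Proof.
move=> Dh; rewrite /Nn addr_ge0 //; first exact: (dform_nonneg HD).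
by apply: muR_ge0 => x; exact: sqr_ge0.
Qed.

Lemma key : dform_irreducible mu D Ef -> forall B : R,
  (forall k, exists h, Sk k h /\ Nn h <= B) -> False.
Proof.
move=> Hirr B Hne.
pose L := [set v : R | exists k, forall h, Sk k h -> v <= Nn h].
have L0 : L 0 by exists 0%N => h [Dh _ _]; exact: Nn_ge0.
have Lub v : L v -> v <= B.
  by move=> [k Hk]; have [h [Sh hB]] := Hne k; exact: le_trans (Hk _ Sh) hB.
have hs : has_sup L by split; [exists 0 | exists B => v Lv; exact: Lub].
set M := sup L.
have Hup k : exists h, Sk k h /\ Nn h < M + (k.+1%:R)^-1.
  apply: contrapT => Hn.
  have : L (M + (k.+1%:R)^-1).
    exists k => h Sh; rewrite leNgt; apply/negP => lt; apply: Hn; exists h; split => //.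
  move=> /(sup_upper_bound hs); rewrite -/M.
  have : 0 < (k.+1%:R : R)^-1 by rewrite invr_gt0 ltr0Sn.
  move: (k.+1%:R^-1) => t; lra.
case: (choice Hup) => a Ha.
have Hlow e : 0 < e -> exists k0, forall h, Sk k0 h -> M - e < Nn h.
  move=> e0; have [v [k Hk] lt] := sup_adherent e0 hs.
  by exists k => h Sh; exact: lt_le_trans lt (Hk _ Sh).
have Da n : D (a n) by case: (Ha n) => [[]].
have Hcauchy : forall eps : R, 0 < eps -> exists N : nat, forall m n : nat,
    (N <= m)%N -> (N <= n)%N -> E1norm2 mu Ef (fun x => a n x - a m x) < eps.
  move=> eps eps0; set e := eps / 8.
  have e0 : 0 < e by rewrite /e divr_gt0.
  have [k0 Hk0] := Hlow e e0; have [k1 Hk1] := arch _ e0.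
  have Hb j : (maxn k0 k1 <= j)%N -> Sk k0 (a j) /\ Nn (a j) < M + e.
    move=> hj; have [Sj Nj] := Ha j; split.
      by apply: (Sk_mono _ Sj); apply: leq_trans hj; exact: leq_maxl.
    apply: (lt_le_trans Nj); rewrite lerD2l; apply: ltW; apply: le_lt_trans Hk1.
    by rewrite lef_pV2 ?posrE ?ltr0Sn // ler_nat ltnS; apply: leq_trans hj; exact: leq_maxr.
  exists (maxn k0 k1) => m n hm hn.
  have [[_ mum Em] Nm] := Hb m hm; have [[_ mun En] Nn'] := Hb n hn.
  have Smid : Sk k0 (comb (1/2) (a n) (1/2) (a m)).
    split; first exact: Dcomb.
      by rewrite muRcomb // mun mum; field.
    rewrite Efcomb2 //; have := Ecomb_ge0 1 (a n) (-1) (a m) (Da n) (Da m).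
    rewrite !expr2; move: En Em; move: (k0.+1%:R^-1) => t En Em; lra.
  have Hmid := Hk0 _ Smid.
  have -> : (fun x => a n x - a m x) = comb 1 (a n) (-1) (a m).
    by apply/funext => x; rewrite /comb; ring.
  move: Hmid Nm Nn'; rewrite /E1norm2 /Nn !Efcomb2 // !muRcomb2 //.
  rewrite /e; lra.
have [p [Dp Hp]] := dform_closed HD Da Hcauchy.
have Hev eps : 0 < eps -> exists N, forall n, (N <= n)%N ->
    Nn (comb 1 (a n) (-1) p) < eps.
  move=> eps0; have := cvgr0_norm_lt _ Hp eps eps0.
  case => N _ HN; exists N => n hn; have := HN n hn => /=.
  have -> : (fun x => a n x - p x) = comb 1 (a n) (-1) p.
    by apply/funext => x; rewrite /comb; ring.
  by move=> h; exact: le_lt_trans (ler_norm _) h.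
have Ep0 : Ef p p = 0.
  apply/eqP; rewrite eq_le (dform_nonneg HD Dp) andbT; rewrite leNgt; apply/negP => Ep.
  have e0 : 0 < Ef p p / 8 by rewrite divr_gt0.
  have [N HN] := Hev _ e0; have [k1 Hk1] := arch _ e0.
  set n := maxn N k1.
  have h1 := HN n (leq_maxl _ _).
  have [[_ _ En] _] := Ha n.
  have h2 : (n.+1%:R : R)^-1 <= (k1.+1%:R)^-1.
    by rewrite lef_pV2 ?posrE ?ltr0Sn // ler_nat ltnS leq_maxr.
  have h3 := Ecomb_ge0 2 (a n) (-1) p (Da n) Dp.
  have h4 : 0 <= muR mu (fun x => comb 1 (a n) (-1) p x ^+ 2).
    by apply: muR_ge0 => x; exact: sqr_ge0.
  move: h1 h4; rewrite /Nn Efcomb2 //.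
  move: h3; rewrite !expr2.
  move: Hk1 En h2; move: (k1.+1%:R^-1) (n.+1%:R^-1) => t1 t2; lra.
have mup : muR mu p = 1.
  apply: contrapT => hne.
  have e1 : 0 < (1 - muR mu p) ^+ 2.
    rewrite lt_neqAle sqr_ge0 andbT eq_sym sqrf_eq0 subr_eq0.
    by apply/eqP => h; apply: hne.
  have [N HN] := Hev _ e1.
  have h1 := HN N (leqnn _).
  have hj := jensen _ (Dcomb 1 (a N) (-1) p (Da N) Dp).
  have hE := dform_nonneg HD (Dcomb 1 (a N) (-1) p (Da N) Dp).
  move: h1 hj hE; rewrite /Nn muRcomb //; have [[_ -> _] _] := Ha N.
  lra.
have := muR_ae0 _ Dp (Hirr p Dp Ep0); rewrite mup => h.
by move: (@oner_neq0 R); rewrite h eqxx.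
Qed.


Lemma trunc_eq (t y : R) : 0 < t ->
  t * Num.min (Num.max (t^-1 * y) 0) 1 = Num.min (Num.max y 0) t.
Proof.
move=> t0; have ti : t * t^-1 = 1 by rewrite mulfV // gt_eqF.
have tip : 0 < t^-1 by rewrite invr_gt0.
have [y0|y0] := leP y 0.
  have : t^-1 * y <= 0 by rewrite pmulr_rle0.
  move=> h; rewrite (max_r h) ?(max_r y0) (min_l ler01) (min_l (ltW t0)) mulr0 //.
have h1 : 0 <= t^-1 * y by rewrite pmulr_rge0 // ltW.
rewrite (max_l h1) ?(max_l (ltW y0)).
have [yt|yt] := leP y t.
  have : t^-1 * y <= 1 by rewrite -(mulVf (lt0r_neq0 t0)) ler_pM2l.
  by move=> h; rewrite (min_l h) ?(min_l yt) mulrA ti mul1r.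
have : 1 < t^-1 * y by rewrite -(mulVf (lt0r_neq0 t0)) ltr_pM2l.
by move=> h; rewrite (min_r (ltW h)) ?(min_r (ltW yt)) mulr1.
Qed.

Lemma trunc_facts (t y : R) : 0 < t ->
  let g := Num.min (Num.max y 0) t in
  [/\ 0 <= g, g ^+ 2 <= y ^+ 2 & Num.max y 0 - g <= t^-1 * y ^+ 2].
Proof.
move=> t0 g; have ti : t * t^-1 = 1 by rewrite mulfV // gt_eqF.
have tip : 0 < t^-1 by rewrite invr_gt0.
have hy2 : 0 <= t^-1 * y ^+ 2 by rewrite mulr_ge0 // ?sqr_ge0 // ltW.
rewrite /g; have [y0|y0] := leP y 0.
  rewrite (min_l (ltW t0)) subrr expr0n /=; split => //; exact: sqr_ge0.
rewrite ?(max_l (ltW y0)); have [yt|yt] := leP y t.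
  by rewrite ?(min_l yt) subrr; split => //; exact: ltW.
rewrite ?(min_r (ltW yt)); split; first exact: ltW.
  nra.
have : t^-1 * y ^+ 2 = y * (t^-1 * y) by rewrite expr2; ring.
move=> ->; have : 1 < t^-1 * y by rewrite -(mulVf (lt0r_neq0 t0)) ltr_pM2l.
nra.
Qed.

Lemma intpos F : D F -> intg (fun x => Num.max (F x) 0).
Proof.
move=> DF; apply: (le_integrable measurableT _ _ (intD DF)).
  apply/measurable_EFinP; apply: (@measurable_maxr _ _ _ _ F (cst 0)); [exact: mfD | exact: measurable_cst].
move=> x _ /=; rewrite lee_fin.
have [h|h] := leP (F x) 0; first by rewrite normr0.
by [].
Qed.


Lemma EfZZ (c : R) f : D f -> Ef (fun x => c * f x) (fun x => c * f x) = c * (c * Ef f f).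
Proof.
move=> Df; have Dc : D (fun x => c * f x) by apply: (dform_domZ HD).
by rewrite EfZ // (dform_sym HD Df Dc) EfZ.
Qed.

Lemma build (C1 C2 : R) : 0 < C1 -> 0 < C2 ->
  (forall f, D f -> muR mu (fun x => f x ^+ 2) <=
        C1 * Ef f f + C2 * (muR mu (fun x => `|f x|)) ^+ 2) ->
  (forall K : R, 0 < K -> exists f, D f /\ K * Ef f f < muR mu (fun x => f x ^+ 2)) ->
  forall k, exists h, Sk k h /\ Nn h <= 32 * C2 + 1.
Proof.
move=> c1 c2 Hdef Hno k.
have kk0 : 0 < (k.+1%:R : R) by rewrite ltr0Sn.
have kk1 : 1 <= (k.+1%:R : R) by rewrite ler1n.
move: kk0 kk1; set kk := (k.+1%:R : R) => kk0 kk1.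
set K := 2 * C1 + 32 * C2 * kk + 1.
have K0 : 0 < K by rewrite /K; nra.
have [f [Df hf]] := Hno K K0.
move: hf; set s := muR mu (fun x => f x ^+ 2) => hf.
have Ef0 := dform_nonneg HD Df.
have s0 : 0 < s by have := mulr_ge0 (ltW K0) Ef0; lra.
have ha := Hdef f Df; move: ha; set a := muR mu (fun x => `|f x|) => ha.
have hsa : s <= 2 * C2 * a ^+ 2.
  have : 0 <= (K - 2 * C1) * Ef f f by rewrite mulr_ge0 // /K; nra.
  rewrite -/s in ha; lra.
pose F2 := comb (-1) f 0 f.
have DF2 : D F2 by apply: Dcomb.
have hsplit : a = muR mu (fun x => Num.max (f x) 0) + muR mu (fun x => Num.max (F2 x) 0).
  rewrite -muRD; try exact: intpos.
  apply: muR_ext => x; rewrite /F2 /comb mul0r addr0 mulN1r.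
  have [h|h] := leP (f x) 0.
    have h' : 0 <= - f x by rewrite oppr_ge0.
    by rewrite ler0_norm // add0r (max_l h').
  have h' : - f x <= 0 by rewrite oppr_le0 ltW.
  by rewrite gtr0_norm // (max_r h') addr0.
have [F [DF EF sF bF]] : exists F, [/\ D F, Ef F F = Ef f f,
    muR mu (fun x => F x ^+ 2) = s & a / 2 <= muR mu (fun x => Num.max (F x) 0)].
  case: (leP (muR mu (fun x => Num.max (F2 x) 0)) (muR mu (fun x => Num.max (f x) 0))) => h.
    by exists f; split => //; lra.
  exists F2; split => //; last by lra.
    by rewrite /F2 Efcomb2 //; ring.
  by apply: muR_ext => x; rewrite /F2 /comb; ring.
move: bF; set b := muR mu (fun x => Num.max (F x) 0) => bF.
have a0 : 0 <= a by apply: muR_ge0 => x; exact: normr_ge0.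
have hsb : s <= 8 * C2 * b ^+ 2.
  have h : a ^+ 2 <= 4 * b ^+ 2.
    have h1 : 0 <= 2 * b - a by lra.
    have h2 : 0 <= 2 * b + a by lra.
    have := mulr_ge0 h1 h2.
    have -> : (2 * b - a) * (2 * b + a) = 4 * b ^+ 2 - a ^+ 2 by ring.
    lra.
  have := ler_wpM2l (ltW c2) h; lra.
have b0 : 0 < b.
  have b0' : 0 <= b by lra.
  rewrite lt_neqAle b0' andbT; apply/eqP => hb.
  by move: hsb; rewrite -hb expr0n /= mulr0; lra.
pose t := 2 * s / b.
have t0 : 0 < t by rewrite /t divr_gt0 // mulr_gt0.
have ts : t^-1 * s = b / 2 by rewrite /t; field; rewrite ?gt_eqF.
pose T := fun x => Num.min (Num.max (t^-1 * F x) 0) 1.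
have DFt : D (fun x => t^-1 * F x) by apply: (dform_domZ HD).
have [DT hT] := dform_markov HD DFt.
pose G := fun x => t * T x.
have DG : D G by apply: (dform_domZ HD).
have EG : Ef G G <= Ef f f.
  rewrite /G EfZZ // -EF.
  move: hT; rewrite EfZZ // => hT.
  have e : t * (t * (t^-1 * (t^-1 * Ef F F))) = Ef F F by field; rewrite gt_eqF.
  rewrite -[X in _ <= X]e; apply: ler_wpM2l; first exact: ltW.
  apply: ler_wpM2l; first exact: ltW.
  exact: hT.
have EG0 := dform_nonneg HD DG.
have Gx x : G x = Num.min (Num.max (F x) 0) t by rewrite /G /T trunc_eq.
have mG2 : muR mu (fun x => G x ^+ 2) <= s.
  rewrite -sF; apply: muR_le; try exact: int2.
  by move=> x; rewrite Gx; have [] := trunc_facts t (F x) t0.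
have mG : b <= muR mu G + t^-1 * s.
  rewrite -sF -muRZ; last exact: int2.
  rewrite -muRD; last 2 first.
  - exact: intD.
  - by apply: intRZ; exact: int2.
  apply: muR_le.
  - exact: intpos.
  - by apply: intRD; [exact: intD | apply: intRZ; exact: int2].
  move=> x; rewrite Gx; have [_ _] := trunc_facts t (F x) t0; lra.
move: mG; rewrite ts; set m := muR mu G => mG.
have m0 : 0 < m by lra.
pose v := m^-1.
have v0 : 0 < v by rewrite invr_gt0.
have vm : v * m = 1 by rewrite /v mulVf // gt_eqF.
pose H := fun x => v * G x.
have DH : D H by apply: (dform_domZ HD).
have muH : muR mu H = 1 by rewrite /H muRZ //; exact: intD.
have EH : Ef H H = v * (v * Ef G G) by rewrite /H EfZZ.
have mH2 : muR mu (fun x => H x ^+ 2) = v ^+ 2 * muR mu (fun x => G x ^+ 2).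
  rewrite -muRZ; last exact: int2.
  by apply: muR_ext => x; rewrite /H; ring.
have vb : v * b <= 2 by nra.
have vb0 : 0 <= v * b by rewrite mulr_ge0 // ltW.
have w2 : (v * b) ^+ 2 <= 4 by nra.
have hEH : K * Ef H H <= 32 * C2.
  rewrite EH.
  have h1 : v * (v * Ef G G) <= v * (v * Ef f f).
    by apply: ler_wpM2l; [exact: ltW | apply: ler_wpM2l; [exact: ltW | exact: EG]].
  have h2 : K * Ef f f <= 8 * C2 * b ^+ 2 by lra.
  have h3 : v ^+ 2 * (K * Ef f f) <= v ^+ 2 * (8 * C2 * b ^+ 2).
    by apply: ler_wpM2l => //; exact: sqr_ge0.
  have h4 : 8 * C2 * (v * b) ^+ 2 <= 32 * C2 by nra.
  have h5 : K * (v * (v * Ef G G)) <= K * (v * (v * Ef f f)) by apply: ler_wpM2l => //; exact: ltW.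
  move: h3 h4 h5; rewrite !expr2; nra.
have EH0 : 0 <= Ef H H := dform_nonneg HD DH.
have EHk : Ef H H <= kk^-1.
  have : 32 * C2 * kk * Ef H H <= 32 * C2.
    apply: le_trans hEH; apply: ler_wpM2r => //; rewrite /K; lra.
  move=> h; rewrite -(ler_pM2l kk0) mulfV ?gt_eqF //.
  have : 0 < 32 * C2 by lra.
  move=> c; rewrite -(ler_pM2l c) mulr1 mulrA; exact: h.
exists H; split; first by split.
rewrite /Nn mH2.
have h6 : v ^+ 2 * muR mu (fun x => G x ^+ 2) <= v ^+ 2 * (8 * C2 * b ^+ 2).
  by apply: ler_wpM2l; [exact: sqr_ge0 | lra].
have h7 : 8 * C2 * (v * b) ^+ 2 <= 32 * C2 by nra.
have h8 : kk^-1 <= 1 by rewrite invf_le1.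
have e : v ^+ 2 * (8 * C2 * b ^+ 2) = 8 * C2 * (v * b) ^+ 2 by ring.
move: h6 h7 EHk h8; rewrite e; move: (v ^+ 2 * _) (8 * C2 * _) (Ef H H) (kk^-1) => A1 A2 A3 A4; lra.
Qed.

End S.

Theorem theorem4p1 (d : measure_display) (E : measurableType d) (R : realType)
  (mu : probability E R) (D : set (E -> R)) (Ef : (E -> R) -> (E -> R) -> R) :
  symmetric_Dirichlet_form mu D Ef ->
  non_conservative D Ef ->
  dform_irreducible mu D Ef ->
  (exists C : R, 0 < C /\
     forall f, D f -> muR mu (fun x => (f x) ^+ 2) <= C * Ef f f)
  <->
  (exists C1 C2 : R, [/\ 0 < C1, 0 < C2 &
     forall f, D f -> muR mu (fun x => (f x) ^+ 2) <=
        C1 * Ef f f + C2 * (muR mu (fun x => `|f x|)) ^+ 2]).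
Proof.
move=> HD _ Hirr; split.
  case=> C [C0 HC]; exists C, 1; split => // f Df.
  have := HC f Df; have := sqr_ge0 (muR mu (fun x => `|f x|)).
  move: (muR mu _) (muR mu _) => A1 A2; lra.
case=> C1 [C2 [c1 c2 Hdef]].
apply: contrapT => Hno.
apply: (@key _ _ _ _ _ _ HD Hirr (32 * C2 + 1)).
apply: (@build _ _ _ _ _ _ HD C1 C2 c1 c2 Hdef).
move=> K K0; apply: contrapT => Hn; apply: Hno.
exists K; split => // f Df; rewrite leNgt; apply/negP => lt; apply: Hn.
by exists f; split.
Qed.
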